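(* Let $n>2$, let $G_n=BS(1,n)=\langle a,b\mid bab^{-1}=a^n\rangle$, and let $\Gamma_n$ be its Cayley graph with respect to $\{a,b\}$. Let $x,y\in G_n$. If there exist $k,k'\in\mathbb{N}$ such that, with $\tilde{x}=xb^k$ and $\tilde{y}=yb^{k'}$, one has $\tilde{y}=\tilde{x}a$, then there is a geodesic in $\Gamma_n$ between $x$ and $y$ containing $\tilde{x}$ and $\tilde{y}$.
   Context: $\Gamma_n$ has vertex set $G_n$ and edges $\{g,gs\}$ for $s\in\{a^{\pm1},b^{\pm1}\}$, each of length 1, with the path-length metric. *)

(* Defs.v *)
(* Concrete model of BS(1,n) = Z[1/n] ⋊ Z. *)
From mathcomp Require Import all_boot all_order all_algebra.
Set Implicit Arguments. Unset Strict Implicit. Unset Printing Implicit Defensive.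
Import Order.TTheory GRing.Theory Num.Theory.
Local Open Scope ring_scope.

(* An element (r, m) stands for a^r b^m, i.e. r ∈ Z[1/n] (inside rat), m ∈ Z.  With a = (1,0), b = (0,1):
   b a b^-1 = (n,0) = a^n.  The group G_n is the subgroup of rat * int
   generated by a and b (predicate inBS below). *)
Definition elt := (rat * int)%type.

Definition bsmul (n : nat) (x y : elt) : elt :=
  (x.1 + (n%:R : rat) ^ x.2 * y.1, x.2 + y.2).

Definition bs_one : elt := (0, 0).

Inductive gen := Ga | GaI | Gb | GbI.

Definition gen_val (s : gen) : elt :=
  match s with
  | Ga => (1, 0) | GaI => (-1, 0) | Gb => (0, 1) | GbI => (0, -1)
  end.

Definition bs_a : elt := gen_val Ga.
Definition bs_b : elt := gen_val Gb.

Definition walk (n : nat) (x : elt) (w : seq gen) : elt :=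
  foldl (fun g s => bsmul n g (gen_val s)) x w.

Definition inBS (n : nat) (x : elt) : Prop := exists w, x = walk n bs_one w.

Definition mul_bpow (n : nat) (x : elt) (k : nat) : elt :=
  iter k (fun g => bsmul n g bs_b) x.

Definition path_from_to (n : nat) (x y : elt) (w : seq gen) : Prop :=
  walk n x w = y.

Definition geodesic (n : nat) (x y : elt) (w : seq gen) : Prop :=
  path_from_to n x y w /\
  forall w', path_from_to n x y w' -> (size w <= size w')%N.

Definition on_path (n : nat) (x : elt) (w : seq gen) (z : elt) : Prop :=
  exists i, (i <= size w)%N /\ walk n x (take i w) = z.

(* Main.v *)
Require Import Defs.
From mathcomp Require Import all_boot all_order all_algebra.
From mathcomp Require Import zify.
Set Implicit Arguments. Unset Strict Implicit. Unset Printing Implicit Defensive.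
Import Order.TTheory GRing.Theory Num.Theory.
Local Open Scope ring_scope.

Fixpoint ev (n : nat) (h : int) (w : seq gen) : rat * int :=
  match w with
  | [::] => (0, h)
  | s :: w' =>
    match s with
    | Ga => ((n%:R : rat) ^ h + (ev n h w').1, (ev n h w').2)
    | GaI => (- (n%:R : rat) ^ h + (ev n h w').1, (ev n h w').2)
    | Gb => ev n (h + 1) w'
    | GbI => ev n (h - 1) w'
    end
  end.

Fixpoint maxh (h : int) (w : seq gen) : int :=
  match w with
  | [::] => h
  | s :: w' =>
    match s with
    | Ga | GaI => maxh h w'
    | Gb => Num.max h (maxh (h + 1) w')
    | GbI => Num.max h (maxh (h - 1) w')
    end
  end.

Definition isa (s : gen) : bool := match s with Ga | GaI => true | _ => false end.
Definition ca (w : seq gen) : nat := count isa w.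
Definition cb (w : seq gen) : nat := count (predC isa) w.

Lemma size_cacb w : size w = (ca w + cb w)%N.
Proof. by rewrite /ca /cb count_predC. Qed.

Lemma walk_ev n x w :
  walk n x w = (x.1 + (ev n x.2 w).1, (ev n x.2 w).2).
Proof.
elim: w x => [|s w IH] [r m] /=; first by rewrite addr0.
rewrite /walk /= -/(walk _ _ _) IH /bsmul /=.
case: s => /=; rewrite ?mulr1 ?mulr0 ?addr0 ?mulrN1 ?addrA //.
Qed.

Lemma maxh_ge h w : h <= maxh h w /\ (ev 0 h w).2 <= maxh h w.
Proof.
elim: w h => [|s w IH] h /=; first by [].
case: s => /=; have := IH h; have := IH (h+1); have := IH (h-1); lia.
Qed.

Lemma ev2 n n' h w : (ev n h w).2 = (ev n' h w).2.
Proof. by elim: w h => [|s w IH] h //=; case: s => /=. Qed.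

Lemma maxh_cb n h w :
  2 * maxh h w - h - (ev n h w).2 <= (cb w)%:Z.
Proof.
rewrite (ev2 n 0).
elim: w h => [|s w IH] h /=; first lia.
case: s => /=; have := IH h; have := IH (h+1); have := IH (h-1);
  have := maxh_ge h w; have := maxh_ge (h+1) w; have := maxh_ge (h-1) w; lia.
Qed.

Lemma ev_bound n h w : (0 < n)%N ->
  `|(ev n h w).1| <= (ca w)%:R * (n%:R : rat) ^ (maxh h w).
Proof.
move=> n0.
have n1 : 1 <= (n%:R : rat) by rewrite ler1n.
elim: w h => [|s w IH] h /=; first by rewrite normr0 mul0r.
rewrite /ca /=.
case: s => /=; rewrite ?add0n ?add1n -/(ca w).
- apply: (le_trans (ler_normD _ _)).
  rewrite mulrSr mulrDl mul1r [X in _ <= X]addrC; apply: lerD; last exact: IH.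
  rewrite ger0_norm; last by rewrite exprz_ge0 // ler0n.
  by apply: ler_weXz2l => //; case: (maxh_ge h w).
- apply: (le_trans (ler_normD _ _)).
  rewrite mulrSr mulrDl mul1r [X in _ <= X]addrC; apply: lerD; last exact: IH.
  rewrite normrN ger0_norm; last by rewrite exprz_ge0 // ler0n.
  by apply: ler_weXz2l => //; case: (maxh_ge h w).
- apply: (le_trans (IH _)); apply: ler_wpM2l; first by rewrite ler0n.
  by apply: ler_weXz2l => //; rewrite le_max lexx orbT.
- apply: (le_trans (IH _)); apply: ler_wpM2l; first by rewrite ler0n.
  by apply: ler_weXz2l => //; rewrite le_max lexx orbT.
Qed.

Lemma pow_lb n j : (2 < n)%N -> (2 * j + 1 <= n ^ j)%N.
Proof.
move=> n2; elim: j => [|j IH]; first by rewrite expn0.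
rewrite expnS; nia.
Qed.

Lemma mul_bpowE n x k : mul_bpow n x k = (x.1, x.2 + k%:Z).
Proof.
elim: k => [|k IH] /=; first by rewrite addr0; case: x.
rewrite /mul_bpow /= -/(mul_bpow n x k) IH /bsmul /= mulr0 addr0.
congr pair; lia.
Qed.

Lemma ev_nseqGb n h j : ev n h (nseq j Gb) = (0, h + j%:Z).
Proof. elim: j h => [|j IH] h /=; first by rewrite addr0. rewrite IH; congr pair; lia. Qed.

Lemma ev_nseqGbI n h j : ev n h (nseq j GbI) = (0, h - j%:Z).
Proof. elim: j h => [|j IH] h /=; first by rewrite subr0. rewrite IH; congr pair; lia. Qed.

Lemma walk_cat n x w1 w2 : walk n x (w1 ++ w2) = walk n (walk n x w1) w2.
Proof. by rewrite /walk foldl_cat. Qed.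

Theorem lemma2 (n : nat) (x y : elt) (k k' : nat) :
  (2 < n)%N -> inBS n x -> inBS n y ->
  mul_bpow n y k' = bsmul n (mul_bpow n x k) bs_a ->
  exists w : seq gen,
    geodesic n x y w /\
    on_path n x w (mul_bpow n x k) /\ on_path n x w (mul_bpow n y k').
Proof.
move=> n2 _ _ H.
have n0 : (0 < n)%N by apply: leq_trans n2.
move: H; rewrite !mul_bpowE /bsmul /= mulr1 addr0.
case: x => r m; case: y => s l /= [Hs Hl].
have Hl' : l = m + k%:Z - k'%:Z by lia.
exists (nseq k Gb ++ [:: Ga] ++ nseq k' GbI).
have Hw1 : walk n (r, m) (nseq k Gb) = (r, m + k%:Z).
  by rewrite walk_ev /= ev_nseqGb addr0.
have Hw2 : walk n (r, m) (nseq k Gb ++ [:: Ga]) = (s, l + k'%:Z).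
  by rewrite walk_cat Hw1 walk_ev /= addr0 Hs Hl.
split; [split|split].
- by rewrite /path_from_to catA walk_cat Hw2 walk_ev /= ev_nseqGbI addr0 addrK.
- move=> w'; rewrite /path_from_to walk_ev /= => -[E1 E2].
  have Ee1 : (ev n m w').1 = (n%:R : rat) ^ (m + k%:Z).
    by move: E1; rewrite Hs => /addrI.
  rewrite !size_cat /= !size_nseq size_cacb.
  have := maxh_cb n m w'; have := maxh_ge m w'; rewrite -(ev2 n) E2 Hl'.
  have := ev_bound m w' n0; rewrite Ee1.
  set M := maxh m w' => Hb [HM1 HM2] Hc.
  have npos : 0 < (n%:R : rat) by rewrite ltr0n.
  case: (lerP (m + k%:Z) M) => HMk.
  + have : (0 < ca w')%N.
      rewrite lt0n; apply/negP => /eqP c0; move: Hb; rewrite c0 mul0r.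
      by rewrite gtr0_norm ?exprz_gt0 // leNgt exprz_gt0.
    lia.
  + pose j := absz ((m + k%:Z - M)%R).
    have Hj : j%:Z = m + k%:Z - M by rewrite /j; lia.
    have : (n ^ j <= ca w')%N.
      rewrite -(ler_nat rat) natrX.
      have E : m + k%:Z = M + j%:Z by rewrite Hj; lia.
      move: Hb; rewrite E expfzDr ?pnatr_eq0 -?lt0n //.
      rewrite gtr0_norm; last by rewrite mulr_gt0 // exprz_gt0.
      by rewrite mulrC ler_pM2r // exprz_gt0.
    move=> H2; have H3 : (2*j+1 <= ca w')%N := leq_trans (pow_lb j n2) H2.
    clear -H3 Hj Hc HM1 HM2 HMk; lia.
- exists k; rewrite size_cat size_nseq leq_addr take_size_cat ?size_nseq //.
- exists k.+1; rewrite catA size_cat size_cat /= size_nseq addn1 leq_addr.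
  rewrite take_size_cat ?size_cat ?size_nseq ?addn1 //.
Qed.
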